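(* Let $V$ be a finite-dimensional vector space over an algebraically closed field $\mathbf{k}$ of characteristic $p$, of dimension $\mathbf{n}\ge3$, equipped with a bilinear form $(,)$ and a quadratic form $Q$ such that either (i) $Q=0$, $(x,x)=0$ for all $x$, and $V^\perp=0$; or (ii) $Q\ne0$, $(x,y)=Q(x+y)-Q(x)-Q(y)$ for all $x,y$, and $Q|_{V^\perp}$ is injective. Let $\kappa\in\{0,1\}$ with $\mathbf{n}-\kappa$ even, $n=(\mathbf{n}-\kappa)/2$. Let $p_1\ge p_2\ge\dots\ge p_\sigma\ge1$ be integers with $p_1+\dots+p_\sigma=n$, and if $\kappa=1$ set $p_{\sigma+1}=1/2$. Let $g\in Is(V)$ and let $(w^t_i)_{t\in[1,\sigma+\kappa],i\in\mathbb{Z}}$ be a $(g,p_* )$-adapted collection. Then $\{w^x_i;\ x\in[1,\sigma+\kappa],\ i\in[0,2p_x-1]\}$ is a basis of $V$.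
   Context: $V^\perp=\{x\in V;(x,V)=0\}$. $Is(V)$ is the group of $g\in GL(V)$ with $(gx,gy)=(x,y)$ and $Q(gx)=Q(x)$ for all $x,y$. A collection of vectors $w^t_i\in V$ ($t\in[1,\sigma+\kappa]$, $i\in\mathbb{Z}$) is $(g,p_* )$-adapted if: (a) $w^t_{i+1}=gw^t_i$ for all $t,i$; (b) for $t\in[1,\sigma]$, $(w^t_i,w^t_j)=0$ if $|i-j|<p_t$ and $(w^t_i,w^t_j)=1$ if $j-i=p_t$; (c) $(w^t_i,w^r_j)=0$ if $0\le i-j+p_r<2p_t$ and $1\le t<r\le\sigma$; (d) if $\kappa=1$, $(w^{\sigma+1}_i,w^{\sigma+1}_i)=2$ for all $i$; (e) if $\kappa=1$, $(w^t_i,w^{\sigma+1}_j)=0$ whenever $0\le i-j<2p_t$ and $1\le t\le\sigma$; (f) $Q(w^t_i)=0$ for $t\in[1,\sigma]$, and $Q(w^{\sigma+1}_i)=1$ if $\kappa=1$. *)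

(* Defs.v *)
From HB Require Import structures.
From mathcomp Require Import all_boot all_order all_algebra all_field.
Set Implicit Arguments. Unset Strict Implicit. Unset Printing Implicit Defensive.
Import Order.TTheory GRing.Theory Num.Theory.
Local Open Scope ring_scope.

Definition is_bilinear_form (k : fieldType) (V : vectType k) (B : V -> V -> k) :=
  forall (a : k) (x y z : V),
    B (a *: x + y) z = a * B x z + B y z /\ B z (a *: x + y) = a * B z x + B z y.

Definition is_quadratic_form (k : fieldType) (V : vectType k) (Q : V -> k) :=
  (forall (a : k) (x : V), Q (a *: x) = a ^+ 2 * Q x) /\
  is_bilinear_form (fun x y => Q (x + y) - Q x - Q y).

Definition in_perp (k : fieldType) (V : vectType k) (B : V -> V -> k) (x : V) :=
  forall y : V, B x y = 0.

Definition in_Is (k : fieldType) (V : vectType k) (B : V -> V -> k) (Q : V -> k)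
  (g : {linear V -> V}) :=
  bijective g /\ (forall x y, B (g x) (g y) = B x y) /\ (forall x, Q (g x) = Q x).

(* (g, p_* )-adapted collection w^t_i, t in [1, sigma + kappa], i in Z.
   p t is p_t for t in [1, sigma]; p_{sigma+1} = 1/2 is handled explicitly. *)
Definition adapted (k : fieldType) (V : vectType k) (B : V -> V -> k) (Q : V -> k)
  (g : V -> V) (sigma kappa : nat) (p : nat -> nat) (w : nat -> int -> V) :=
  (* (a) *)
  (forall t (i : int), (1 <= t <= sigma + kappa)%N -> w t (i + 1) = g (w t i)) /\
  (* (b) *)
  (forall t (i j : int), (1 <= t <= sigma)%N ->
      (`|i - j| < (p t)%:Z -> B (w t i) (w t j) = 0) /\
      (j - i = (p t)%:Z -> B (w t i) (w t j) = 1)) /\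
  (* (c) *)
  (forall t r (i j : int), (1 <= t)%N -> (t < r)%N -> (r <= sigma)%N ->
      0 <= i - j + (p r)%:Z -> i - j + (p r)%:Z < 2 * (p t)%:Z ->
      B (w t i) (w r j) = 0) /\
  (* (d) *)
  (kappa = 1%N -> forall i : int, B (w sigma.+1 i) (w sigma.+1 i) = 2%:R) /\
  (* (e) *)
  (kappa = 1%N -> forall t (i j : int), (1 <= t <= sigma)%N ->
      0 <= i - j -> i - j < 2 * (p t)%:Z -> B (w t i) (w sigma.+1 j) = 0) /\
  (* (f) *)
  (forall t (i : int), (1 <= t <= sigma)%N -> Q (w t i) = 0) /\
  (kappa = 1%N -> forall i : int, Q (w sigma.+1 i) = 1).

(* The family {w^x_i ; x in [1, sigma+kappa], i in [0, 2 p_x - 1]}, as a sequence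
   (with 2 p_{sigma+1} - 1 = 0 when kappa = 1). *)
Definition adapted_family (k : fieldType) (V : vectType k) (sigma kappa : nat)
  (p : nat -> nat) (w : nat -> int -> V) : seq V :=
  flatten [seq [seq w t (Posz i) | i <- iota 0 (2 * p t)] | t <- iota 1 sigma]
  ++ (if kappa == 1%N then [:: w sigma.+1 0] else [::]).

(* Main.v *)
Require Import Defs.
From HB Require Import structures.
From mathcomp Require Import all_boot all_order all_algebra all_field zify ring.
Import Order.TTheory GRing.Theory Num.Theory.
Local Open Scope ring_scope.

Lemma tri_free (k : fieldType) (V : vectType k) n (v : 'I_n -> V)
  (phi : 'I_n -> V -> k) (rho : 'I_n -> nat) :
 (forall i a u u', phi i (a *: u + u') = a * phi i u + phi i u') ->
 (forall i, phi i (v i) != 0) ->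
 (forall i j, j != i -> phi i (v j) != 0 -> (rho j < rho i)%N) ->
 forall c, \sum_j c j *: v j = 0 -> forall i, c i = 0.
Proof.
move=> hlin hdiag htri c hc.
have phi0 i : phi i 0 = 0.
  have := hlin i 1 0 0; rewrite scale1r addr0 mul1r => h.
  by apply: (@addrI _ (phi i 0)); rewrite addr0 -h.

have phiD i u u' : phi i (u + u') = phi i u + phi i u'.
  by rewrite -[u in LHS]scale1r hlin mul1r.
have phiZ i a u : phi i (a *: u) = a * phi i u.
  by rewrite -[_ *: _]addr0 hlin phi0 addr0.
have phisum i : phi i (\sum_j c j *: v j) = \sum_j c j * phi i (v j).
  rewrite (big_morph (phi i) (phiD i) (phi0 i)).
  by apply: eq_bigr => j _; rewrite phiZ.
suff H m : forall i, (rho i < m)%N -> c i = 0 by move=> i; exact: (H (rho i).+1).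
elim: m => [//|m IH] i him.
have := phisum i; rewrite hc phi0 (bigD1 i) //= big1 ?addr0.
  by move/esym/eqP; rewrite mulf_eq0 (negPf (hdiag i)) orbF => /eqP.
move=> j hji; have [->|nz] := eqVneq (phi i (v j)) 0; first by rewrite mulr0.
by rewrite IH ?mul0r //; apply: leq_trans (htri _ _ hji nz) _.
Qed.

Lemma lexge K a b c d : (c*K + d <= a*K + b)%N -> (b < K)%N -> (d < K)%N -> (c < a)%N \/ (c = a /\ d <= b)%N.
Proof. move=> h hb hd. nia. Qed.
Lemma lexlt K a b c d : (b < K)%N -> (d < K)%N -> (a < c)%N \/ (a = c /\ b < d)%N -> (a*K + b < c*K + d)%N.
Proof. move=> hb hd h. nia. Qed.

Lemma uniq_flat (F : nat -> seq (nat * nat)) m n :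
  (forall t x, x \in F t -> x.1 = t) -> (forall t, uniq (F t)) ->
  uniq (flatten [seq F t | t <- iota m n]).
Proof.
move=> h1 h2; elim: n m => [//|n IH] m /=.
rewrite cat_uniq h2 IH andbT /=; apply/hasPn => x /flatten_mapP [t].
rewrite mem_iota => /andP [ht _] /h1 hx; apply/negP => /h1; lia.
Qed.

Theorem mainTheorem3 (k : closedFieldType) (V : vectType k)
  (B : V -> V -> k) (Q : V -> k) (N : nat)
  (hB : is_bilinear_form B) (hQ : is_quadratic_form Q)
  (hdim : \dim (fullv : {vspace V}) = N) (hN : (3 <= N)%N)
  (hcase :
     ((forall x, Q x = 0) /\ (forall x, B x x = 0) /\
      (forall x, in_perp B x -> x = 0))
     \/
     ((exists x, Q x != 0) /\ (forall x y, B x y = Q (x + y) - Q x - Q y) /\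
      (forall x y, in_perp B x -> in_perp B y -> Q x = Q y -> x = y)))
  (kappa : nat) (hkappa : (kappa <= 1)%N) (hpar : ~~ odd (N - kappa))
  (sigma : nat) (p : nat -> nat)
  (hp1 : forall t, (1 <= t <= sigma)%N -> (1 <= p t)%N)
  (hpdec : forall t, (1 <= t)%N -> (t < sigma)%N -> (p t.+1 <= p t)%N)
  (hpsum : (\sum_(1 <= t < sigma.+1) p t)%N = ((N - kappa) %/ 2)%N)
  (g : {linear V -> V}) (hg : in_Is B Q g)
  (w : nat -> int -> V) (hw : adapted B Q g sigma kappa p w) :
  basis_of fullv (adapted_family sigma kappa p w).
Proof.
have [ha [hb [hc [hd [he [hf hf1]]]]]] := hw.
have pmono r t : (1 <= r)%N -> (r <= t)%N -> (t <= sigma)%N -> (p t <= p r)%N.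
  move=> h1 h2; elim: t h2 => [|t IH]; first by lia.
  rewrite leq_eqVlt => /orP [/eqP <- //|hrt] hts.
  apply: leq_trans (hpdec _ _ _) (IH hrt _); lia.
have ple t : (1 <= t <= sigma)%N -> (p t <= N)%N.
  move=> ht; apply: (@leq_trans ((N - kappa) %/ 2)%N); last first.
    by rewrite leq_divLR // ; lia.
  rewrite -hpsum (bigD1_seq t) ?iota_uniq ?mem_index_iota /=; [exact: leq_addr | lia | done].
have Badd1 x y z : B (x + y) z = B x z + B y z.
  by have [h _] := hB 1 x y z; rewrite scale1r mul1r in h.
have Badd2 x y z : B z (x + y) = B z x + B z y.
  by have [_ h] := hB 1 x y z; rewrite scale1r mul1r in h.
have Bsw x y : B y x = B x y \/ B y x = - B x y.
  case: hcase => [[_ [halt _]]|[_ [hBQ _]]].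
    right; have := halt (x + y); rewrite Badd1 !Badd2 !halt add0r addr0.
    by move/eqP; rewrite addr_eq0 => /eqP ->; rewrite opprK.
  by left; rewrite !hBQ [y + x]addrC -!addrA [- Q y + _]addrC.
have Bsw0 x y : B x y = 0 -> B y x = 0.
  by move=> h; case: (Bsw x y) => ->; rewrite h ?oppr0.
have Q0 : Q 0 = 0.
  by case: hQ => hQ1 _; have := hQ1 0 0; rewrite scale0r expr0n /= mul0r.
have [psi psilin psinz] : exists2 psi : V -> k,
    (forall a u u', psi (a *: u + u') = a * psi u + psi u') &
    (w sigma.+1 0 != 0 -> psi (w sigma.+1 0) != 0).
  case: (eqVneq (w sigma.+1 0) 0) => [->|nz].
    by exists (fun _ => 0) => // *; rewrite mulr0 addr0.
  have := coord_vbasis (memvf (w sigma.+1 0)).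
  case: (pickP (fun i => coord (vbasis fullv) i (w sigma.+1 0) != 0)) => [i0 hi0|h0].
    by exists (coord (vbasis fullv) i0) => // *; rewrite linearP.
  rewrite big1 => [hw0|i _]; first by rewrite hw0 eqxx in nz.
  by have := h0 i => /negbFE/eqP ->; rewrite scale0r.
pose S := sigma.
pose s : seq (nat * nat) :=
  flatten [seq [seq (t, i) | i <- iota 0 (2 * p t)] | t <- iota 1 sigma]
  ++ (if kappa == 1%N then [:: (sigma.+1, 0%N)] else [::]).
pose v (x : nat * nat) := w x.1 (Posz x.2).
have famE : adapted_family sigma kappa p w = map v s.
  rewrite /adapted_family /s map_cat map_flatten -map_comp; congr (_ ++ _).
    congr flatten; apply: eq_map => t /=; rewrite -map_comp; exact: eq_map.
  by case: (kappa == 1%N).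
have memS x : x \in s -> ((1 <= x.1 <= sigma)%N /\ (x.2 < 2 * p x.1)%N) \/
                        (kappa = 1%N /\ x = (sigma.+1, 0%N)).
  rewrite mem_cat => /orP [/flatten_mapP [t] | ].
    rewrite mem_iota => ht /mapP [i]; rewrite mem_iota => hi -> /=; left; lia.
  by case: eqP => // -> ; rewrite inE => /eqP ->; right.
have uniqS : uniq s.
  rewrite cat_uniq uniq_flat ?andbT /=.
  - case: eqP => _ //=; rewrite orbF andbT; apply/negP => /flatten_mapP [t].
    by rewrite mem_iota => ht /mapP [i _ [/eqP]]; lia.
  - by move=> t x /mapP [i _ ->].
  - by move=> t; rewrite map_inj_uniq ?iota_uniq // => i j [].
have sizeS : size s = N.
  rewrite size_cat size_flatten /shape -map_comp.
  rewrite (eq_map (_ : _ =1 fun t => 2 * p t)%N); last by move=> t /=; rewrite size_map size_iota.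
  rewrite sumnE big_map -big_distrr /=.
  have -> : iota 1 sigma = index_iota 1 sigma.+1 by rewrite /index_iota subSS subn0.
  rewrite hpsum.
  have := divn_eq (N - kappa) 2; rewrite modn2 (negPf hpar) /=.
  by case: eqP => /= hk; lia.
pose phi (x : nat * nat) : V -> k :=
  if x.1 == sigma.+1 then psi else
  if (p x.1 <= x.2)%N then B (w x.1 (Posz (x.2 - p x.1)))
  else B (w x.1 (Posz (x.2 + p x.1))).
pose rho (x : nat * nat) : nat :=
  if x.1 == sigma.+1 then ((2 * N + 2) * S.+1)%N else
  if (p x.1 <= x.2)%N then ((N - (x.2 - p x.1)) * S.+1 + x.1)%N
  else ((N + 1 + x.2) * S.+1 + (S - x.1))%N.
have philin x a u u' : phi x (a *: u + u') = a * phi x u + phi x u'.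
  rewrite /phi; case: eqP => _; first exact: psilin.
  by case: leqP => _; set z := w _ _; case: (hB a u u' z).
have hdiag x : x \in s -> phi x (v x) != 0.
  case: x => t i /memS /= [[ht hi]|[hk [-> ->]]]; last first.
    rewrite /phi /v /= eqxx; apply: psinz; apply/eqP => h0.
    by have := hf1 hk 0; rewrite h0 Q0 => /eqP; rewrite eq_sym oner_eq0.
  rewrite /phi /v /=; have -> : (t == sigma.+1) = false by apply/eqP; lia.
  case: leqP => hpi.
    by rewrite (proj2 (hb t _ _ ht)) ?oner_eq0 //; lia.
  have h1 := proj2 (hb t (Posz i) (Posz (i + p t)) ht) ltac:(lia).
  by case: (Bsw (w t (Posz i)) (w t (Posz (i + p t)))) => ->; rewrite h1 ?oppr_eq0 oner_eq0.
have htri x y : x \in s -> y \in s -> y != x -> (rho x <= rho y)%N -> phi x (v y) = 0.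
  case: x => t i; case: y => r j => /memS /= hx /memS /= hy.
  case: hx => [[ht hi]|[hk [-> ->]]]; last first.
    case: hy => [[hr hj]|[_ [-> ->]]]; last by rewrite eqxx.
    move=> hne hle; rewrite /rho /S /= in hle; rewrite /phi /v /=.
    have hpr := hp1 r hr; have hpr' := ple r hr.
    have e : (r == sigma.+1) = false by apply/eqP; lia.
    move: hle; rewrite eqxx e; case: (leqP (p r) j) => hrj hle; exfalso.
      have := @lexlt sigma.+1 (N - (j - p r)) r (2 * N + 2) 0 ltac:(lia) ltac:(lia) ltac:(left; lia).
      by rewrite addn0 => h; move: (leq_trans h hle); rewrite ltnn.
    have := @lexlt sigma.+1 (N + 1 + j) (sigma - r) (2 * N + 2) 0 ltac:(lia) ltac:(lia) ltac:(left; lia).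
      by rewrite addn0 => h; move: (leq_trans h hle); rewrite ltnn.
  move=> hne hle; rewrite /rho /S /= in hle; rewrite /phi /v /=.
  have hpt := hp1 t ht; have hpt' := ple t ht.
  have et : (t == sigma.+1) = false by apply/eqP; lia.
  rewrite et in hle *.
  case: hy => [[hr hj]|[hk [-> ->]]]; last first.
    case: leqP => hti; apply: (he hk) => //; lia.
  have hpr := hp1 r hr; have hpr' := ple r hr.
  have hm1 : (r < t)%N -> (p t <= p r)%N by move=> h; apply: pmono; lia.
  have hm2 : (t < r)%N -> (p r <= p t)%N by move=> h; apply: pmono; lia.
  have hne' : r <> t \/ j <> i.
    case: (eqVneq r t) => [e|]; last by left; apply/eqP.
    case: (eqVneq j i) => [e'|]; last by right; apply/eqP.
    by rewrite e e' eqxx in hne.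
  move: hle; have -> : (r == sigma.+1) = false by apply/eqP; lia.
  case: (leqP (p t) i) => hti; case: (leqP (p r) j) => hrj hle;
  have hlex := @lexge _ _ _ _ _ hle; have {hlex} hlex := hlex ltac:(lia) ltac:(lia);
  case: (ltngtP t r) => htr; first [solve [apply: hc; lia] |
     solve [apply: Bsw0; apply: hc; lia] |
     solve [subst r; apply: (proj1 (hb t _ _ ht)); lia]].
have hfree : free (map v s).
  apply/(@freeP _ _ _ (in_tuple (map v s))) => c hsum i.
  pose x0 := (0%N, 0%N).
  apply: (@tri_free k V (size (map v s)) (fun j => (in_tuple (map v s))`_j)
     (fun j => phi (nth x0 s j)) (fun j => rho (nth x0 s j)) _ _ _ c hsum).
  - by move=> *; apply: philin.
  - move=> j; rewrite /= (nth_map x0); last by rewrite size_map in j *.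
    by apply: hdiag; apply: mem_nth; rewrite size_map in j *.
  - move=> j1 j2 hne.
    have hj1 : (j1 < size s)%N by rewrite -(size_map v) ltn_ord.
    have hj2 : (j2 < size s)%N by rewrite -(size_map v) ltn_ord.
    rewrite /= (nth_map x0) //.
    rewrite ltnNge; apply: contra => hle; apply/eqP; apply: htri => //; try exact: mem_nth.
    by rewrite nth_uniq //; apply: contra hne => /eqP /val_inj ->.
rewrite famE /basis_of hfree andbT eqEdim subvf /= hdim.
by move: hfree; rewrite /free => /eqP ->; rewrite size_map sizeS.
Qed.
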